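(* Let $K$ be a finite field of characteristic $p$, let $d$ be an integer with $\gcd(d,|K|-1)=1$, and let $A,B$ be values assumed by $W_{K,d}$ on $K^\times$. If $A$ and $B$ are Galois conjugates over $\mathbb{Q}$, then $|\{a\in K^\times: W_{K,d}(a)=A\}|=|\{a\in K^\times: W_{K,d}(a)=B\}|$.
   Context: $\psi_K(x)=\exp(2\pi i\,\mathrm{Tr}_{K/\mathbb{F}_p}(x)/p)$ and $W_{K,d}(a)=\sum_{x\in K}\psi_K(x^d+ax)$, an element of $\mathbb{Q}(\zeta_p)$, $\zeta_p$ a primitive $p$th root of unity. *)

(* Defs.v *)
From HB Require Import structures.
From mathcomp Require Import all_boot all_order all_algebra all_field.
Set Implicit Arguments. Unset Strict Implicit. Unset Printing Implicit Defensive.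
Import GRing.Theory Num.Theory.
Local Open Scope ring_scope.

Definition absTr (K : finFieldType) (p : nat) (x : K) : K :=
  \sum_(i < logn p #|K|) x ^+ (p ^ i).

(* The trace lies in the prime field {0%:R, ..., (p-1)%:R}; trNat returns the
   residue k < p with k%:R = Tr(x) (as a natural number). *)
Definition trNat (K : finFieldType) (p : nat) (x : K) : nat :=
  odflt 0%N (omap (@nat_of_ord p) [pick k : 'I_p | (k%:R : K) == absTr p x]).

(* psi_K(x) = zeta ^ Tr(x), zeta a primitive p-th root of unity in algC. *)
Definition psiK (K : finFieldType) (p : nat) (zeta : algC) (x : K) : algC :=
  zeta ^+ trNat p x.

Definition WKd (K : finFieldType) (p : nat) (zeta : algC) (d : nat) (a : K) : algC :=
  \sum_(x : K) psiK p zeta (x ^+ d + a * x).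

(* Main.v *)
Require Import Defs.
From HB Require Import structures.
From mathcomp Require Import all_boot all_order all_algebra all_field.
From mathcomp Require Import ring.
Set Implicit Arguments. Unset Strict Implicit.
Import GRing.Theory Num.Theory.
Local Open Scope ring_scope.

Lemma natX_pexp (K : finFieldType) p (chK : p \in [pchar K]) (k i : nat) :
  (k%:R : K) ^+ (p ^ i) = k%:R.
Proof.
elim: i => [|i IH]; first by rewrite expn0 expr1.
by rewrite expnSr exprM IH -(pFrobenius_autE chK) pFrobenius_aut_nat.
Qed.

Lemma absTrZ (K : finFieldType) p (chK : p \in [pchar K]) (k : nat) (y : K) :
  absTr p (k%:R * y) = k%:R * absTr p y.
Proof.
rewrite /absTr mulr_sumr; apply: eq_bigr => i _.
by rewrite exprMn (natX_pexp chK).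
Qed.

Lemma natr_eq_mod (K : finFieldType) p (chK : p \in [pchar K]) (m n : nat) :
  (m%:R : K) = n%:R -> m = n %[mod p].
Proof.
wlog le: m n / (n <= m)%N.
  move=> W E; case: (leqP n m) => h; first exact: W.
  by symmetry; apply: W; [apply: ltnW | rewrite E].
move=> E; apply/eqP; rewrite eqn_mod_dvd // (dvdn_pcharf chK) natrB // E subrr eqxx.
done.
Qed.

Lemma natr_mod (K : finFieldType) p (chK : p \in [pchar K]) (m : nat) :
  (((m %% p)%N)%:R : K) = m%:R.
Proof. by rewrite {2}(divn_eq m p) natrD natrM (pcharf0 chK) mulr0 add0r. Qed.

Lemma trNat_scale (K : finFieldType) p (chK : p \in [pchar K]) (zeta : algC)
  (pz : p.-primitive_root zeta) (k : nat) (ck : coprime k p) (y : K) :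
  zeta ^+ (k * trNat p y) = zeta ^+ trNat p (k%:R * y).
Proof.
have pp := pcharf_prime chK.
have k0 : (0 < k)%N.
  move: ck; case: (k) => // ; rewrite /coprime gcd0n => /eqP p1.
  by rewrite p1 in pp.
rewrite /trNat.
case: pickP => [j /eqP Hj | Hn] /=.
- case: pickP => [j' /eqP Hj' | Hn'] /=.
  + apply/eqP; rewrite (eq_prim_root_expr pz); apply/eqP; symmetry.
    apply: (natr_eq_mod chK). by rewrite Hj' (absTrZ chK) -Hj natrM.
  + exfalso.
    have lt : (k * j %% p < p)%N by rewrite ltn_mod prime_gt0.
    move: (Hn' (Ordinal lt)) => /=.
    by rewrite (natr_mod chK) natrM Hj -(absTrZ chK) eqxx.
- case: pickP => [j' /eqP Hj' | //] /=; last by rewrite muln0.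
  exfalso.
  case: (egcdnP p k0) => km kn E _.
  rewrite (eqP ck) in E.
  have e1 : (km%:R * k%:R : K) = 1.
    by rewrite -natrM E natrD natrM (pcharf0 chK) mulr0 add0r.
  have lt : (km * j' %% p < p)%N by rewrite ltn_mod prime_gt0.
  move: (Hn (Ordinal lt)) => /=.
  by rewrite (natr_mod chK) natrM Hj' -(absTrZ chK) mulrA e1 mul1r eqxx.
Qed.

Theorem corollary5p2 (K : finFieldType) (p d : nat) (zeta A B : algC) :
  p \in [pchar K] ->
  p.-primitive_root zeta ->
  coprime d #|K|.-1 ->
  (exists2 a : K, a != 0 & WKd p zeta d a = A) ->
  (exists2 b : K, b != 0 & WKd p zeta d b = B) ->
  (exists sigma : {rmorphism algC -> algC}, sigma A = B) ->
  #|[set a : K | (a != 0) && (WKd p zeta d a == A)]| =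
  #|[set a : K | (a != 0) && (WKd p zeta d a == B)]|.
Proof.
move=> chK pz cd _ _ [sigma sA].
have pp := pcharf_prime chK.
have pzs : p.-primitive_root (sigma zeta) by rewrite fmorph_primitive_root.
have [i si] := prim_rootP pz (prim_expr_order pzs).
have ci : coprime i p by rewrite -(prim_root_exp_coprime i pz) -si.
set c : K := i%:R.
have c0 : c != 0.
  rewrite /c -(dvdn_pcharf chK); apply/negP => hd.
  move: ci; rewrite /coprime (gcdn_idPr hd) => /eqP p1.
  by rewrite p1 in pp.
have Kgt0 : (0 < #|K|)%N by apply/card_gt0P; exists 0.
have cq : c ^+ #|K|.-1 = 1.
  move: (expf_card c); rewrite -{1}(prednK Kgt0) exprS => h.
  by apply: (mulfI c0); rewrite mulr1.
have [u u0 ud] : exists2 u : K, u != 0 & u ^+ d = c.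
  case: (posnP d) => [d0 | dgt0].
  - exists 1; first exact: oner_neq0.
    rewrite d0 expr0; move: cd; rewrite d0 /coprime gcd0n => /eqP q1.
    by rewrite q1 expr1 in cq; rewrite cq.
  - case: (egcdnP #|K|.-1 dgt0) => km kn E _.
    rewrite (eqP cd) in E.
    exists (c ^+ km); first by rewrite expf_neq0.
    by rewrite -exprM E mulnC exprD exprM cq expr1n mul1r expr1.
set cc := c * u^-1.
have cc0 : cc != 0 by rewrite mulf_neq0 // invr_neq0.
have key : forall a, sigma (WKd p zeta d a) = WKd p zeta d (cc * a).
  move=> a; rewrite /WKd rmorph_sum /=.
  rewrite (reindex_inj (mulfI (invr_neq0 u0))) /=.
  apply: eq_bigr => x _.
  rewrite /psiK rmorphXn si -exprM (trNat_scale chK pz ci).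
  congr (_ ^+ trNat p _).
  rewrite mulrDr exprMn exprVn ud /cc.
  congr (_ + _); last ring.
  by rewrite mulrA (mulfV c0) mul1r.
have eqS : [set a : K | (a != 0) && (WKd p zeta d a == A)] =
    (fun a => cc * a) @^-1: [set a : K | (a != 0) && (WKd p zeta d a == B)].
  apply/setP => a; rewrite !inE mulf_eq0 negb_or (negbTE cc0) /=.
  by rewrite -key -sA (inj_eq (fmorph_inj sigma)).
by rewrite eqS card_preimset //; apply: mulfI.
Qed.
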